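(* Let $\mathfrak A$ and $\mathcal A$ be Banach algebras with $\mathcal A$ a commutative Banach $\mathfrak A$-bimodule with compatible actions. Then $\mathcal A$ is $\mathfrak A$-module uniformly approximately amenable if and only if it is $\mathfrak A$-module amenable.
   Context: Compatible actions: $\alpha\cdot(ab)=(\alpha\cdot a)b$, $(ab)\cdot\alpha=a(b\cdot\alpha)$; commutative means $\alpha\cdot a=a\cdot\alpha$. A Banach $\mathcal A$-$\mathfrak A$-module is a Banach space $X$ which is a Banach $\mathcal A$-bimodule and $\mathfrak A$-bimodule with $\alpha\cdot(a\cdot x)=(\alpha\cdot a)\cdot x$, $a\cdot(\alpha\cdot x)=(a\cdot\alpha)\cdot x$, $a\cdot(x\cdot\alpha)=(a\cdot x)\cdot\alpha$ and analogous right identities; commutative if $\alpha\cdot x=x\cdot\alpha$; $X^*$ has dual actions. A module derivation $D:\mathcal A\to X^*$ is additive, bounded ($\|D(a)\|\le M\|a\|$), with $D(ab)=D(a)\cdot b+a\cdot D(b)$, $D(\alpha\cdot a)=\alpha\cdot D(a)$, $D(a\cdot\alpha)=D(a)\cdot\alpha$. $\mathcal A$ is $\mathfrak A$-module amenable if for every commutative Banach $\mathcal A$-$\mathfrak A$-module $X$ every module derivation $D:\mathcal A\to X^*$ is inner ($D(a)=a\cdot f-f\cdot a$ for some $f\in X^*$), and $\mathfrak A$-module uniformly approximately amenable if for every such $X$ and $D$ there is a net $(f_i)\subseteq X^*$ with $\sup_{\|a\|\le1}\|D(a)-(a\cdot f_i-f_i\cdot a)\|\to0$. *)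

(* Defs.v *)
From HB Require Import structures.
From mathcomp Require Import all_boot all_order all_algebra.
From mathcomp Require Import all_classical all_reals all_analysis.
From mathcomp.real_closed Require Export complex.
Export numFieldNormedType.Exports.
Set Implicit Arguments. Unset Strict Implicit. Unset Printing Implicit Defensive.
Import Order.TTheory GRing.Theory Num.Theory.
Local Open Scope ring_scope.

Section BanachModules.
Variable K : numFieldType.

Definition contractive_bilinear (U V W : normedModType K) (m : U -> V -> W) :=
  [/\ (forall u1 u2 v, m (u1 + u2) v = m u1 v + m u2 v),
      (forall (k : K) u v, m (k *: u) v = k *: m u v),
      (forall u v1 v2, m u (v1 + v2) = m u v1 + m u v2),
      (forall (k : K) u v, m u (k *: v) = k *: m u v) &
      (forall u v, `|m u v| <= `|u| * `|v|)].

Definition banach_algebra (A : completeNormedModType K) (mul : A -> A -> A) :=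
  contractive_bilinear mul /\ (forall a b c, mul a (mul b c) = mul (mul a b) c).

Definition banach_bimodule (A : completeNormedModType K) (mul : A -> A -> A)
    (X : completeNormedModType K) (l : A -> X -> X) (r : X -> A -> X) :=
  [/\ contractive_bilinear l, contractive_bilinear r,
      (forall a b x, l (mul a b) x = l a (l b x)),
      (forall a b x, r x (mul a b) = r (r x a) b) &
      (forall a b x, l a (r x b) = r (l a x) b)].

Definition compatible_actions (U A : completeNormedModType K)
    (mulA : A -> A -> A) (lU : U -> A -> A) (rU : A -> U -> A) :=
  (forall al a b, lU al (mulA a b) = mulA (lU al a) b) /\
  (forall al a b, rU (mulA a b) al = mulA a (rU b al)).

Definition commutative_action (U X : completeNormedModType K)
    (l : U -> X -> X) (r : X -> U -> X) := forall al x, l al x = r x al.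

Definition banach_AU_module
    (U : completeNormedModType K) (mulU : U -> U -> U)
    (A : completeNormedModType K) (mulA : A -> A -> A)
    (lUA : U -> A -> A) (rUA : A -> U -> A)
    (X : completeNormedModType K)
    (la : A -> X -> X) (ra : X -> A -> X)
    (lu : U -> X -> X) (ru : X -> U -> X) :=
  [/\ banach_bimodule mulA la ra, banach_bimodule mulU lu ru,
      [/\ (forall al a x, lu al (la a x) = la (lUA al a) x),
          (forall al a x, la a (lu al x) = la (rUA a al) x) &
          (forall al a x, la a (ru x al) = ru (la a x) al)] &
      [/\ (forall al a x, ra (lu al x) a = lu al (ra x a)),
          (forall al a x, ra (ru x al) a = ra x (lUA al a)) &
          (forall al a x, ru (ra x a) al = ra x (rUA a al))]].

Definition dual_elem (X : normedModType K) (f : X -> K) :=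
  [/\ (forall x y, f (x + y) = f x + f y),
      (forall (k : K) x, f (k *: x) = k * f x) &
      exists M : K, forall x, `|f x| <= M * `|x|].

Definition dual_lact (A X : Type) (r : X -> A -> X) (a : A) (f : X -> K) :
  X -> K := fun x => f (r x a).
Definition dual_ract (A X : Type) (l : A -> X -> X) (f : X -> K) (a : A) :
  X -> K := fun x => f (l a x).

Definition module_derivation
    (U A X : completeNormedModType K) (mulA : A -> A -> A)
    (lUA : U -> A -> A) (rUA : A -> U -> A)
    (la : A -> X -> X) (ra : X -> A -> X)
    (lu : U -> X -> X) (ru : X -> U -> X) (D : A -> X -> K) :=
  [/\ (forall a, dual_elem (D a)),
      (forall a b, D (a + b) = (fun x => D a x + D b x)),
      (* boundedness ||D(a)|| <= M ||a||, the dual norm unfolded *)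
      (exists M : K, forall a x, `|D a x| <= M * `|a| * `|x|),
      (forall a b, D (mulA a b) =
         (fun x => dual_ract la (D a) b x + dual_lact ra a (D b) x)) &
      (forall al a, D (lUA al a) = dual_lact ru al (D a)) /\
      (forall al a, D (rUA a al) = dual_ract lu (D a) al)].

Definition ad_dual (A X : Type) (la : A -> X -> X) (ra : X -> A -> X)
  (f : X -> K) (a : A) : X -> K :=
  fun x => dual_lact ra a f x - dual_ract la f a x.

Definition module_amenable
    (U : completeNormedModType K) (mulU : U -> U -> U)
    (A : completeNormedModType K) (mulA : A -> A -> A)
    (lUA : U -> A -> A) (rUA : A -> U -> A) :=
  forall (X : completeNormedModType K)
         (la : A -> X -> X) (ra : X -> A -> X)
         (lu : U -> X -> X) (ru : X -> U -> X),
    banach_AU_module mulU mulA lUA rUA la ra lu ru ->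
    commutative_action lu ru ->
    forall D : A -> X -> K, module_derivation mulA lUA rUA la ra lu ru D ->
    exists f : X -> K, dual_elem f /\ forall a, D a = ad_dual la ra f a.

(* Uniform approximate amenability: a net (f_i)_{i in I} in X^*, I directed
   by le, with sup_{||a||<=1} ||D(a) - ad_{f_i}(a)|| -> 0 along the net;
   the supremum of dual norms is unfolded as a uniform bound. *)
Definition module_uniformly_approximately_amenable
    (U : completeNormedModType K) (mulU : U -> U -> U)
    (A : completeNormedModType K) (mulA : A -> A -> A)
    (lUA : U -> A -> A) (rUA : A -> U -> A) :=
  forall (X : completeNormedModType K)
         (la : A -> X -> X) (ra : X -> A -> X)
         (lu : U -> X -> X) (ru : X -> U -> X),
    banach_AU_module mulU mulA lUA rUA la ra lu ru ->
    commutative_action lu ru ->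
    forall D : A -> X -> K, module_derivation mulA lUA rUA la ra lu ru D ->
    exists (I : Type) (le : I -> I -> Prop) (f : I -> X -> K),
      [/\ inhabited I,
          (forall i, le i i) /\ (forall i j k, le i j -> le j k -> le i k),
          (forall i j, exists k, le i k /\ le j k),
          (forall i, dual_elem (f i)) &
          forall eps : K, 0 < eps -> exists i0, forall i, le i0 i ->
            forall a x, `|D a x - ad_dual la ra (f i) a x| <= eps * `|a| * `|x|].

End BanachModules.

(* Main.v *)
Require Import Defs.
From mathcomp Require Import all_boot all_order all_algebra.
From mathcomp Require Import all_classical all_reals all_analysis.
From mathcomp.real_closed Require Import complex.
Import numFieldNormedType.Exports.
Local Open Scope ring_scope.

(* Proof world: MathComp-Analysis.  Strategy: UAA => amenable via the l^1-direct
   sum module (uniform bound on approximating functionals) and a geometric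
   iteration; amenable => UAA trivially. *)
From HB Require Import structures.
From mathcomp.algebra_tactics Require Import ring lra.
Set Implicit Arguments. Unset Strict Implicit. Unset Printing Implicit Defensive.
Import Order.TTheory GRing.Theory Num.Theory.
Local Open Scope ring_scope.
Local Open Scope classical_set_scope.
Local Open Scope complex_scope.

Section CA.
Variable R : realType.
Local Notation C := R[i].

Lemma Rcauchy_cvg (u : nat -> R) :
  (forall e, 0 < e -> exists N, forall m n, (N <= m)%N -> (N <= n)%N -> `|u m - u n| <= e) ->
  cvgn u.
Proof.
move=> H; apply/cauchy_cvgP; apply: cauchy_exP => e e0.
have e2 : 0 < e / 2 by lra.
have [N HN] := H (e / 2) e2.
exists (u N); exists N => // n /= Hn.
rewrite /ball /=; apply: (le_lt_trans (HN N n (leqnn N) Hn)). lra.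
Qed.

Lemma Rcvg_eps (u : nat -> R) : cvgn u -> forall e, 0 < e ->
  exists N, forall n, (N <= n)%N -> `|limn u - u n| <= e.
Proof. move=> /cvgrPdist_le H e e0. have [N _ HN] := H e e0. by exists N. Qed.
End CA.

Section CB.
Variable R : realType.
Local Notation C := R[i].
Local Notation cRe := (@complex.Re R).
Local Notation cIm := (@complex.Im R).

Definition nr {V : normedZmodType C} (x : V) : R := cRe `|x|.

Lemma normE {V : normedZmodType C} (x : V) : `|x| = (nr x)%:C.
Proof. by rewrite /nr RRe_real // ger0_real. Qed.

Lemma nr_ge0 {V : normedZmodType C} (x : V) : 0 <= nr x.
Proof. by have := normr_ge0 x; rewrite normE ler0c. Qed.

Lemma nrD {V : normedZmodType C} (x y : V) : nr (x + y) <= nr x + nr y.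
Proof. by have := ler_normD x y; rewrite !normE -rmorphD lecR. Qed.

Lemma nr0 {V : normedZmodType C} : nr (0 : V) = 0.
Proof. by rewrite /nr normr0. Qed.

Lemma nrN {V : normedZmodType C} (x : V) : nr (- x) = nr x.
Proof. by rewrite /nr normrN. Qed.

Lemma nrB {V : normedZmodType C} (x y : V) : nr (x - y) = nr (y - x).
Proof. by rewrite /nr distrC. Qed.

Lemma nr_eq0 {V : normedZmodType C} (x : V) : nr x = 0 -> x = 0.
Proof. by move=> h; apply/normr0_eq0; rewrite normE h. Qed.

Lemma nrZ {V : normedModType C} (k : C) (x : V) : nr (k *: x) = nr k * nr x.
Proof. by rewrite /nr normrZ !normE -rmorphM. Qed.

Lemma nrM (a b : C) : nr (a * b) = nr a * nr b.
Proof. by rewrite /nr normrM !normE -rmorphM. Qed.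

Lemma nrR (r : R) : nr (r%:C) = `|r|.
Proof. by rewrite /nr normc_def /= expr0n /= addr0 sqrtr_sqr. Qed.

Lemma nr_Re (z : C) : `|cRe z| <= nr z.
Proof. by rewrite -lecR -normE normc_ge_Re. Qed.

Lemma nr_Im (z : C) : `|cIm z| <= nr z.
Proof.
have := nr_Re (z * 'i%C). rewrite nrM.
have -> : nr ('i%C : C) = 1 by rewrite /nr normc_def /= expr0n /= add0r expr1n sqrtr1.
by rewrite mulr1 ReiNIm normrN.
Qed.

Lemma nr_le_ReIm (z : C) : nr z <= `|cRe z| + `|cIm z|.
Proof.
rewrite /nr normc_def /=. case: z => a b /=.
rewrite -(@ler_pXn2r _ 2) ?nnegrE ?sqrtr_ge0 ?addr_ge0 //.
rewrite sqr_sqrtr ?addr_ge0 ?sqr_ge0 //.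
rewrite -[in X in X <= _](real_normK (num_real a)) -[in X in X <= _](real_normK (num_real b)) sqrrD.
have : 0 <= `|a| * `|b| by rewrite mulr_ge0.
lra.
Qed.

Lemma nr_le {V W : normedZmodType C} (y : V) (M : C) (z : W) :
  `|y| <= M * `|z| -> nr y <= nr M * nr z.
Proof.
move=> h.
have h0 : 0 <= M * `|z| by apply: le_trans h.
have e : M * `|z| = `|M| * `|z| by rewrite -(ger0_norm h0) normrM normr_id.
by move: h; rewrite e !normE -rmorphM lecR.
Qed.

Lemma le_nr {V W : normedZmodType C} (y : V) (M : R) (z : W) :
  nr y <= M * nr z -> `|y| <= M%:C * `|z|.
Proof. by move=> h; rewrite !normE -rmorphM lecR. Qed.

End CB.

Section CC.
Variable R : realType.
Local Notation C := R[i].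
Local Notation cRe := (@complex.Re R).
Local Notation cIm := (@complex.Im R).

Lemma ReB (x y : C) : cRe (x - y) = cRe x - cRe y.
Proof. by case: x; case: y. Qed.

Lemma ImB (x y : C) : cIm (x - y) = cIm x - cIm y.
Proof. by case: x; case: y. Qed.

Lemma le0_eps (x : R) : (forall e, 0 < e -> x <= e) -> x <= 0.
Proof.
move=> H; case: (lerP x 0) => // hx.
have := H (x / 2); lra.
Qed.

Lemma nr_sum (I : Type) (r : seq I) (P : pred I) (t : I -> C) :
  nr (\sum_(i <- r | P i) t i) <= \sum_(i <- r | P i) nr (t i).
Proof.
have h := ler_norm_sum r t P.
have e : \sum_(i <- r | P i) `|t i| = (\sum_(i <- r | P i) nr (t i))%:C.
  by rewrite rmorph_sum; apply: eq_bigr => i _; rewrite normE.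
by rewrite e normE lecR in h.
Qed.

Definition ccvg (u : nat -> C) (L : C) := forall e : R, 0 < e ->
  exists N, forall n, (N <= n)%N -> nr (u n - L) <= e.

Definition cauchyC (u : nat -> C) := forall e : R, 0 < e ->
  exists N, forall m n, (N <= m)%N -> (N <= n)%N -> nr (u m - u n) <= e.

Definition climit (u : nat -> C) : C :=
  (limn (fun n => cRe (u n))) +i* (limn (fun n => cIm (u n))).

Lemma ccvg_climit u : cauchyC u -> ccvg u (climit u).
Proof.
move=> H.
have cR : cvgn (fun n => cRe (u n)).
  apply: Rcauchy_cvg => e e0; have [N HN] := H e e0; exists N => m n hm hn.
  by rewrite -ReB; apply: le_trans (nr_Re _) (HN m n hm hn).
have cI : cvgn (fun n => cIm (u n)).
  apply: Rcauchy_cvg => e e0; have [N HN] := H e e0; exists N => m n hm hn.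
  by rewrite -ImB; apply: le_trans (nr_Im _) (HN m n hm hn).
move=> e e0.
have e2 : 0 < e / 2 by lra.
have [N1 H1] := Rcvg_eps cR e2.
have [N2 H2] := Rcvg_eps cI e2.
exists (maxn N1 N2) => n hn.
apply: le_trans (nr_le_ReIm _) _.
rewrite ReB ImB /= distrC [X in _ + X]distrC.
have := H1 n (leq_trans (leq_maxl _ _) hn).
have := H2 n (leq_trans (leq_maxr _ _) hn).
lra.
Qed.

Lemma ccvg_uniq u L M : ccvg u L -> ccvg u M -> L = M.
Proof.
move=> HL HM; apply/eqP; rewrite -subr_eq0; apply/eqP; apply: nr_eq0.
apply/le_anti; rewrite nr_ge0 andbT; apply: le0_eps => e e0.
have e2 : 0 < e / 2 by lra.
have [N1 H1] := HL _ e2; have [N2 H2] := HM _ e2.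
have h1 := H1 (maxn N1 N2) (leq_maxl _ _).
have h2 := H2 (maxn N1 N2) (leq_maxr _ _).
have : L - M = (u (maxn N1 N2) - M) - (u (maxn N1 N2) - L) by ring.
move=> ->; apply: le_trans (nrD _ _) _; rewrite nrN; lra.
Qed.

Lemma ccvgD u v L M : ccvg u L -> ccvg v M -> ccvg (fun n => u n + v n) (L + M).
Proof.
move=> HL HM e e0.
have e2 : 0 < e / 2 by lra.
have [N1 H1] := HL _ e2; have [N2 H2] := HM _ e2.
exists (maxn N1 N2) => n hn.
have h1 := H1 n (leq_trans (leq_maxl _ _) hn).
have h2 := H2 n (leq_trans (leq_maxr _ _) hn).
have -> : u n + v n - (L + M) = (u n - L) + (v n - M) by ring.
apply: le_trans (nrD _ _) _; lra.
Qed.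

Lemma ccvgZ (k : C) u L : ccvg u L -> ccvg (fun n => k * u n) (k * L).
Proof.
move=> HL e e0.
have hk := nr_ge0 k.
have e2 : 0 < e / (nr k + 1) by apply: divr_gt0 => //; lra.
have [N H] := HL _ e2.
exists N => n hn; rewrite -mulrBr nrM.
have := H n hn => h.
have h3 : nr k * nr (u n - L) <= (nr k + 1) * (e / (nr k + 1)).
  apply: ler_pM => //; [exact: nr_ge0 | lra].
have hpos : 0 < nr k + 1 by lra.
apply: le_trans h3 _; rewrite mulrC divfK //; exact: lt0r_neq0.
Qed.

Lemma ccvg_le u L (B : R) : ccvg u L -> (forall n, nr (u n) <= B) -> nr L <= B.
Proof.
move=> HL HB; rewrite -subr_le0; apply: le0_eps => e e0.
have [N H] := HL e e0.
have h := H N (leqnn N).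
have : L = u N - (u N - L) by ring.
move=> eL; have := nrD (u N) (- (u N - L)); rewrite -eL nrN.
have := HB N; lra.
Qed.

Definition ps (t : nat -> C) N := \sum_(0 <= k < N) t k.

Definition summ (t : nat -> C) := exists M : R, forall N, \sum_(0 <= k < N) nr (t k) <= M.

Definition csum (t : nat -> C) := climit (ps t).

Lemma ps_diff t m n : (m <= n)%N -> ps t n - ps t m = \sum_(m <= k < n) t k.
Proof. move=> h; rewrite /ps (big_cat_nat (leq0n m) h) /=; ring. Qed.

Lemma summ_cauchy t : summ t -> cauchyC (ps t).
Proof.
move=> [M HM].
pose s N := \sum_(0 <= k < N) nr (t k).
have sinc : {homo s : n m / (n <= m)%N >-> n <= m}.
  move=> n m hnm; rewrite /s (big_cat_nat (leq0n n) hnm) /= lerDl.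
  by apply: sumr_ge0 => i _; apply: nr_ge0.
have scv : cvgn s.
  apply: nondecreasing_is_cvgn => //; exists M => _ [n _ <-]; exact: HM.
move=> e e0.
have e2 : 0 < e / 2 by lra.
have [N HN] := Rcvg_eps scv e2.
exists N => m n hm hn.
wlog hmn : m n hm hn / (m <= n)%N.
  move=> W; case: (leqP m n) => h; first exact: W.
  by rewrite nrB; apply: W => //; apply: ltnW.
rewrite nrB ps_diff //; apply: le_trans (nr_sum _ _ _) _.
have -> : \sum_(m <= k < n) nr (t k) = s n - s m.
  rewrite /s (big_cat_nat (leq0n m) hmn) /=; ring.
have := HN m hm; have := HN n hn.
rewrite !(distrC (limn s)).
have := ler_norm (s n - limn s); have := ler_normr (s m - limn s) .
move=> h1 h2 h3 h4.
have h5 : limn s - s m <= e / 2 by apply: le_trans _ h4; rewrite -opprB ler_normr lexx orbT.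
lra.
Qed.

Lemma csum_ccvg t : summ t -> ccvg (ps t) (csum t).
Proof. by move=> h; apply: ccvg_climit; apply: summ_cauchy. Qed.

Lemma csum_eq t L : summ t -> ccvg (ps t) L -> csum t = L.
Proof. by move=> h hL; apply: (ccvg_uniq (csum_ccvg h) hL). Qed.

Lemma summD t s : summ t -> summ s -> summ (fun n => t n + s n).
Proof.
move=> [M1 H1] [M2 H2]; exists (M1 + M2) => N.
apply: le_trans (lerD (H1 N) (H2 N)); rewrite -big_split /=.
by apply: ler_sum => i _; apply: nrD.
Qed.

Lemma summZ (k : C) t : summ t -> summ (fun n => k * t n).
Proof.
move=> [M H]; exists (nr k * M) => N.
under eq_bigr do rewrite nrM; rewrite -mulr_sumr.
by apply: ler_wpM2l; [apply: nr_ge0 | apply: H].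
Qed.

Lemma csumD t s : summ t -> summ s -> csum (fun n => t n + s n) = csum t + csum s.
Proof.
move=> ht hs; apply: csum_eq; first exact: summD.
have -> : ps (fun n => t n + s n) = (fun N => ps t N + ps s N).
  by apply: funext => N; rewrite /ps big_split.
exact: ccvgD (csum_ccvg ht) (csum_ccvg hs).
Qed.

Lemma csumZ (k : C) t : summ t -> csum (fun n => k * t n) = k * csum t.
Proof.
move=> ht; apply: csum_eq; first exact: summZ.
have -> : ps (fun n => k * t n) = (fun N => k * ps t N).
  by apply: funext => N; rewrite /ps mulr_sumr.
exact: ccvgZ (csum_ccvg ht).
Qed.

Lemma csum_le t (B : R) : summ t -> (forall N, \sum_(0 <= k < N) nr (t k) <= B) ->
  nr (csum t) <= B.
Proof.
move=> ht hB; apply: ccvg_le (csum_ccvg ht) _ => n.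
by apply: le_trans (nr_sum _ _ _) (hB n).
Qed.

Lemma sum_delta (V : zmodType) (f : nat -> V) k n : (forall m, m != k -> f m = 0) ->
  \sum_(0 <= i < n) f i = if (k < n)%N then f k else 0.
Proof.
move=> H; elim: n => [|n IH]; first by rewrite big_geq.
rewrite big_nat_recr //= IH.
case: (ltngtP k n) => hkn.
- rewrite (H n); last by rewrite neq_ltn hkn orbT.
  by rewrite addr0 ltnS (ltnW hkn).
- rewrite (H n); last by rewrite neq_ltn hkn.
  by rewrite addr0 ltnS leqNgt hkn.
- by rewrite hkn add0r ltnSn.
Qed.

Lemma csum_delta t k : (forall m, m != k -> t m = 0) -> csum t = t k.
Proof.
move=> H.
have HS : forall N, \sum_(0 <= i < N) nr (t i) = if (k < N)%N then nr (t k) else 0.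
  by move=> N; apply: (@sum_delta _ (fun i => nr (t i)) k N) => m hm; rewrite H // nr0.
apply: csum_eq.
  exists (nr (t k)) => N; rewrite HS; case: ifP => _; [exact: lexx | exact: nr_ge0].
move=> e e0; exists k.+1 => n hn; rewrite /ps (@sum_delta _ t k n H) hn subrr nr0.
exact: ltW.
Qed.

End CC.


Section L1.
Variable R : realType.
Local Notation C := R[i].
Variable X : completeNormedModType C.

Definition psn (e : nat -> X) N : R := \sum_(0 <= k < N) nr (e k).

Definition l1b (e : nat -> X) := exists M : R, forall N, psn e N <= M.

Record l1 := L1 { l1v : nat -> X; l1P : `[< l1b l1v >] }.

HB.instance Definition _ := [isSub for l1v].

HB.instance Definition _ := [Choice of l1 by <:].

Lemma l1_ext (x y : l1) : l1v x = l1v y -> x = y.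
Proof. by move=> h; apply: val_inj. Qed.

Lemma psn_ge0 e N : 0 <= psn e N.
Proof. by apply: sumr_ge0 => i _; apply: nr_ge0. Qed.

Lemma psn_mono e m n : (m <= n)%N -> psn e m <= psn e n.
Proof.
move=> h; rewrite /psn (big_cat_nat (leq0n m) h) /= lerDl.
by apply: sumr_ge0 => i _; apply: nr_ge0.
Qed.

Lemma l1b0 : l1b (fun _ => 0).
Proof. by exists 0 => N; rewrite /psn big1 // => i _; rewrite nr0. Qed.

Lemma l1bD e f : l1b e -> l1b f -> l1b (fun n => e n + f n).
Proof.
move=> [M1 H1] [M2 H2]; exists (M1 + M2) => N.
apply: le_trans (lerD (H1 N) (H2 N)); rewrite /psn -big_split /=.
by apply: ler_sum => i _; apply: nrD.
Qed.

Lemma l1bN e : l1b e -> l1b (fun n => - e n).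
Proof. by move=> [M H]; exists M => N; rewrite /psn; under eq_bigr do rewrite nrN; apply: H. Qed.

Lemma l1bZ (k : C) e : l1b e -> l1b (fun n => k *: e n).
Proof.
move=> [M H]; exists (nr k * M) => N; rewrite /psn.
under eq_bigr do rewrite nrZ; rewrite -mulr_sumr.
by apply: ler_wpM2l; [apply: nr_ge0 | apply: H].
Qed.

Definition l1zero : l1 := L1 (asboolT l1b0).
Definition l1add (x y : l1) : l1 := L1 (asboolT (l1bD (asboolW (l1P x)) (asboolW (l1P y)))).
Definition l1opp (x : l1) : l1 := L1 (asboolT (l1bN (asboolW (l1P x)))).
Definition l1scale (k : C) (x : l1) : l1 := L1 (asboolT (l1bZ k (asboolW (l1P x)))).

Lemma l1addA : associative l1add.
Proof. by move=> x y z; apply: l1_ext; apply: funext => n /=; rewrite addrA. Qed.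

Lemma l1addC : commutative l1add.
Proof. by move=> x y; apply: l1_ext; apply: funext => n /=; rewrite addrC. Qed.

Lemma l1add0 : left_id l1zero l1add.
Proof. by move=> x; apply: l1_ext; apply: funext => n /=; rewrite add0r. Qed.

Lemma l1addN : left_inverse l1zero l1opp l1add.
Proof. by move=> x; apply: l1_ext; apply: funext => n /=; rewrite addNr. Qed.

HB.instance Definition _ := GRing.isZmodule.Build l1 l1addA l1addC l1add0 l1addN.

Lemma l1scaleA a b v : l1scale a (l1scale b v) = l1scale (a * b) v.
Proof. by apply: l1_ext; apply: funext => n /=; rewrite scalerA. Qed.

Lemma l1scale1 : left_id 1 l1scale.
Proof. by move=> x; apply: l1_ext; apply: funext => n /=; rewrite scale1r. Qed.

Lemma l1scaleDr : right_distributive l1scale +%R.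
Proof. by move=> a x y; apply: l1_ext; apply: funext => n /=; rewrite scalerDr. Qed.

Lemma l1scaleDl v : {morph l1scale^~ v : a b / a + b}.
Proof. by move=> a b; apply: l1_ext; apply: funext => n /=; rewrite scalerDl. Qed.

HB.instance Definition _ := GRing.Zmodule_isLmodule.Build C l1 l1scaleA l1scale1 l1scaleDr l1scaleDl.

Lemma l1vD (x y : l1) : l1v (x + y) = fun n => l1v x n + l1v y n. Proof. by []. Qed.
Lemma l1vN (x : l1) : l1v (- x) = fun n => - l1v x n. Proof. by []. Qed.
Lemma l1vB (x y : l1) : l1v (x - y) = fun n => l1v x n - l1v y n. Proof. by []. Qed.
Lemma l1vZ k (x : l1) : l1v (k *: x) = fun n => k *: l1v x n. Proof. by []. Qed.
Lemma l1v0 : l1v 0 = fun _ => 0. Proof. by []. Qed.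

Definition l1n (x : l1) : R := sup (range (psn (l1v x))).

Lemma l1n_hub x : has_ubound (range (psn (l1v x))).
Proof. by have [M H] := asboolW (l1P x); exists M => _ [N _ <-]. Qed.

Lemma psn_le x N : psn (l1v x) N <= l1n x.
Proof. by apply: (ub_le_sup (l1n_hub x)); exists N. Qed.

Lemma l1n_le x B : (forall N, psn (l1v x) N <= B) -> l1n x <= B.
Proof. by move=> H; apply: ge_sup; [exists (psn (l1v x) 0); exists 0 | move=> _ [N _ <-]]. Qed.

Lemma l1n_ge0 x : 0 <= l1n x.
Proof. exact: le_trans (psn_ge0 _ 0) (psn_le x 0). Qed.

Lemma nr_l1v x n : nr (l1v x n) <= l1n x.
Proof.
apply: le_trans (psn_le x n.+1); rewrite /psn big_nat_recr //= lerDr.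
exact: psn_ge0.
Qed.

Lemma l1n_D x y : l1n (x + y) <= l1n x + l1n y.
Proof.
apply: l1n_le => N; rewrite l1vD.
apply: le_trans (lerD (psn_le x N) (psn_le y N)); rewrite /psn -big_split /=.
by apply: ler_sum => i _; apply: nrD.
Qed.

Lemma psnZ k (x : l1) N : psn (l1v (k *: x)) N = nr k * psn (l1v x) N.
Proof. by rewrite /psn mulr_sumr; apply: eq_bigr => i _; rewrite l1vZ nrZ. Qed.

Lemma l1n_Z k x : l1n (k *: x) = nr k * l1n x.
Proof.
apply/le_anti/andP; split.
  by apply: l1n_le => N; rewrite psnZ; apply: ler_wpM2l; [apply: nr_ge0 | apply: psn_le].
have [->|hk] := eqVneq k 0.
  by rewrite nr0 mul0r; apply: l1n_ge0.
have nk : 0 < nr k.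
  by rewrite lt0r nr_ge0 andbT; apply/eqP => h; move/eqP: hk; apply; apply: nr_eq0.
rewrite -ler_pdivlMl //; apply: l1n_le => N.
by rewrite ler_pdivlMl // -psnZ; apply: psn_le.
Qed.

Lemma l1n_eq0 x : l1n x = 0 -> x = 0.
Proof.
move=> h; apply: l1_ext; apply: funext => n; rewrite l1v0 /=.
apply: nr_eq0; apply/le_anti; rewrite nr_ge0 andbT -h; exact: nr_l1v.
Qed.

Definition l1nC (x : l1) : C := (l1n x)%:C.

Lemma l1nC_D x y : l1nC (x + y) <= l1nC x + l1nC y.
Proof. by rewrite /l1nC -rmorphD lecR; apply: l1n_D. Qed.

Lemma l1nC_Z (l : C) x : l1nC (l *: x) = `|l| * l1nC x.
Proof. by rewrite /l1nC l1n_Z normE rmorphM. Qed.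

Lemma l1nC_eq0 x : l1nC x = 0 -> x = 0.
Proof. by rewrite /l1nC => -[h]; apply: l1n_eq0. Qed.

HB.instance Definition _ := Lmodule_isNormed.Build C l1 l1nC_D l1nC_Z l1nC_eq0.

Check (l1 : normedModType C).


Lemma l1_normE (x : l1) : `|x| = (l1n x)%:C.
Proof. by []. Qed.

Lemma near_all_lt (F : set_system l1) (FF : Filter F) (P : nat -> l1 -> Prop) N :
  (forall n, F (P n)) -> F (fun y => forall n, (n < N)%N -> P n y).
Proof.
move=> H; elim: N => [|N IH].
  by apply: filterS filterT => y _ n; rewrite ltn0.
apply: filterS (filterI IH (H N)) => y [h1 h2] n.
by rewrite ltnS leq_eqVlt => /orP [/eqP -> //|]; apply: h1.
Qed.

Lemma l1_complete (F : set_system l1) : ProperFilter F -> cauchy F -> cvg F.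
Proof.
move=> FF Fc.
have Fce : cauchy_ex F by apply/cauchyP.
pose pi n (x : l1) := l1v x n.
have cn : forall n, cvg (pi n @ F).
  move=> n; apply/cauchy_cvgP; apply: cauchy_exP => eps heps.
  have [x0 Hx0] := Fce eps heps.
  exists (l1v x0 n).
  suff : F (fun y : l1 => ball (l1v x0 n) eps (l1v y n)) by [].
  apply: filterS Hx0 => y; rewrite -!ball_normE /ball_ /= => h.
  apply: le_lt_trans h; rewrite normE l1_normE lecR.
  exact: (nr_l1v (x0 - y) n).
pose z n := lim (pi n @ F).
have zc : forall n, pi n @ F --> z n := fun n => cn n.
have key : forall r : R, 0 < r -> forall x0, F (ball x0 (r%:C)) ->
    forall N, psn (fun n => z n - l1v x0 n) N <= r.
  move=> r r0 x0 Fx0 N.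
  rewrite -subr_le0; apply: le0_eps => eta heta.
  have hN := ler0n R N.
  pose d := eta / (N%:R + 1).
  have d0 : 0 < d by apply: divr_gt0 => //; lra.
  have Hn : forall n, F (fun y => `|z n - l1v y n| < d%:C).
    move=> n; have := zc n; move/cvgrPdist_lt => /(_ (d%:C)).
    by rewrite ltcR => /(_ d0).
  have Hall : F (fun y => forall n, (n < N)%N -> `|z n - l1v y n| < d%:C) by apply: near_all_lt.
  have [y [hy1 hy2]] := filter_ex (filterI Hall Fx0).
  move: hy2; rewrite -ball_normE /ball_ /= l1_normE ltcR => hy2.
  have h1 : psn (fun n => z n - l1v x0 n) N <=
      \sum_(0 <= n < N) d + psn (l1v (y - x0)) N.
    rewrite /psn -big_split /=; apply: ler_sum_nat => n hn.
    have -> : z n - l1v x0 n = (z n - l1v y n) + l1v (y - x0) n.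
      by rewrite l1vB addrA subrK.
    apply: le_trans (nrD _ _) _; apply: lerD => //.
    have := hy1 n (andP hn).2; rewrite normE ltcR => h; exact: ltW.
  have h2 : psn (l1v (y - x0)) N <= r.
    apply: le_trans (psn_le _ N) _; rewrite -(opprB x0 y).
    have -> : l1n (- (x0 - y)) = l1n (x0 - y).
      by rewrite -scaleN1r l1n_Z nrN /nr normr1 mul1r.
    exact: ltW.
  have h3 : \sum_(0 <= n < N) d = N%:R * d by rewrite sumr_const_nat subn0 mulr_natl.
  have h4 : N%:R * d <= eta.
    rewrite /d mulrA ler_pdivrMr; last by lra.
    by rewrite mulrC ler_pM2l //; lra.
  lra.
have h01 : (0 : C) < 1%:C by rewrite ltcR.
have [x1 Fx1] := Fce 1%:C h01.
have hz : l1b z.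
  exists (1 + l1n x1) => N.
  have k1 := key 1 ltr01 x1 Fx1 N.
  have k2 := psn_le x1 N.
  suff : psn z N <= psn (fun n => z n - l1v x1 n) N + psn (l1v x1) N by lra.
  rewrite /psn -big_split /=; apply: ler_sum => n _.
  by have := nrD (z n - l1v x1 n) (l1v x1 n); rewrite subrK.
pose zl : l1 := L1 (asboolT hz).
apply: (cvgP zl); apply/cvgrPdist_le => eps heps.
have er : eps = (complex.Re eps)%:C by rewrite RRe_real // gtr0_real.
have hr : 0 < complex.Re eps / 2 by move: heps; rewrite er ltcR; lra.
have hr' : (0 : C) < (complex.Re eps / 2)%:C by rewrite ltcR.
have [x0 Fx0] := Fce _ hr'.
have hzx : l1n (zl - x0) <= complex.Re eps / 2.
  by apply: l1n_le => N; apply: (key _ hr x0 Fx0 N).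
apply: filterS Fx0 => y; rewrite -ball_normE /ball_ /= l1_normE ltcR => hy.
rewrite er l1_normE lecR.
have -> : zl - y = (zl - x0) + (x0 - y) by rewrite addrA subrK.
apply: le_trans (l1n_D _ _) _.
lra.
Qed.

HB.instance Definition _ := Uniform_isComplete.Build l1 l1_complete.

Check (l1 : completeNormedModType C).


End L1.


From HB Require Import structures.


Section LM.
Variable R : realType.
Local Notation C := R[i].
Variable X : completeNormedModType C.
Local Notation E := (l1 X).

Lemma nr_norm {V : normedZmodType C} (u : V) : nr `|u| = nr u.
Proof. by rewrite /nr normr_id. Qed.

Lemma cb_nr (T V W : normedModType C) (m : T -> V -> W) :
  contractive_bilinear m -> forall u v, nr (m u v) <= nr u * nr v.
Proof.
move=> [_ _ _ _ h] u v; have := nr_le (h u v); rewrite nr_norm; exact.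
Qed.

Lemma cb_l0 (T V W : normedModType C) (m : T -> V -> W) :
  contractive_bilinear m -> forall v, m 0 v = 0.
Proof.
move=> [h _ _ _ _] v; have := h 0 0 v; rewrite addr0 => e.
by apply: (addrI (m 0 v)); rewrite addr0 -e.
Qed.

Lemma cb_r0 (T V W : normedModType C) (m : T -> V -> W) :
  contractive_bilinear m -> forall u, m u 0 = 0.
Proof.
move=> [_ _ h _ _] u; have := h u 0 0; rewrite addr0 => e.
by apply: (addrI (m u 0)); rewrite addr0 -e.
Qed.

Definition mkl1 (f : nat -> X) : E :=
  match pselect (l1b f) with left h => L1 (asboolT h) | right _ => 0 end.

Lemma mkl1K f : l1b f -> l1v (mkl1 f) = f.
Proof. by move=> h; rewrite /mkl1; case: pselect. Qed.

Definition liftL (T : normedModType C) (m : T -> X -> X) (t : T) (e : E) : E :=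
  mkl1 (fun n => m t (l1v e n)).

Definition liftR (T : normedModType C) (m : X -> T -> X) (e : E) (t : T) : E :=
  mkl1 (fun n => m (l1v e n) t).

Lemma psn_le_ge0 (f : nat -> X) (e : E) (c : R) : 0 <= c ->
  (forall n, nr (f n) <= c * nr (l1v e n)) -> forall N, psn f N <= c * l1n e.
Proof.
move=> c0 H N; apply: le_trans (_ : c * psn (l1v e) N <= _).
  by rewrite /psn mulr_sumr; apply: ler_sum => i _; apply: H.
by apply: ler_wpM2l => //; apply: psn_le.
Qed.

Lemma liftL_v (T : normedModType C) (m : T -> X -> X) : contractive_bilinear m ->
  forall t e, l1v (liftL m t e) = fun n => m t (l1v e n).
Proof.
move=> hm t e; apply: mkl1K; exists (nr t * l1n e).
by apply: psn_le_ge0; [apply: nr_ge0 | move=> n; apply: cb_nr].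
Qed.

Lemma liftR_v (T : normedModType C) (m : X -> T -> X) : contractive_bilinear m ->
  forall e t, l1v (liftR m e t) = fun n => m (l1v e n) t.
Proof.
move=> hm e t; apply: mkl1K; exists (nr t * l1n e).
apply: psn_le_ge0; [apply: nr_ge0 | move=> n].
by rewrite mulrC; apply: cb_nr.
Qed.

Lemma cb_liftL (T : normedModType C) (m : T -> X -> X) : contractive_bilinear m ->
  contractive_bilinear (liftL m).
Proof.
move=> hm; have [h1 h2 h3 h4 h5] := hm; split.
- move=> u1 u2 v; apply: l1_ext; rewrite l1vD !liftL_v //.
  by apply: funext => n; rewrite h1.
- move=> k u v; apply: l1_ext; rewrite l1vZ !liftL_v //.
  by apply: funext => n; rewrite h2.
- move=> u v1 v2; apply: l1_ext; rewrite l1vD !liftL_v // l1vD.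
  by apply: funext => n; rewrite h3.
- move=> k u v; apply: l1_ext; rewrite l1vZ !liftL_v // l1vZ.
  by apply: funext => n; rewrite h4.
- move=> u v; rewrite !l1_normE [`|u|]normE -rmorphM lecR.
  apply: l1n_le; rewrite liftL_v //; apply: psn_le_ge0; first exact: nr_ge0.
  by move=> n; apply: cb_nr.
Qed.

Lemma cb_liftR (T : normedModType C) (m : X -> T -> X) : contractive_bilinear m ->
  contractive_bilinear (liftR m).
Proof.
move=> hm; have [h1 h2 h3 h4 h5] := hm; split.
- move=> u1 u2 v; apply: l1_ext; rewrite l1vD !liftR_v // l1vD.
  by apply: funext => n; rewrite h1.
- move=> k u v; apply: l1_ext; rewrite l1vZ !liftR_v // l1vZ.
  by apply: funext => n; rewrite h2.
- move=> u v1 v2; apply: l1_ext; rewrite l1vD !liftR_v //.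
  by apply: funext => n; rewrite h3.
- move=> k u v; apply: l1_ext; rewrite l1vZ !liftR_v //.
  by apply: funext => n; rewrite h4.
- move=> u v; rewrite !l1_normE [`|v|]normE -rmorphM lecR mulrC.
  apply: l1n_le; rewrite liftR_v //; apply: psn_le_ge0; first exact: nr_ge0.
  by move=> n; rewrite mulrC; apply: cb_nr.
Qed.

Lemma l1_module (U A : completeNormedModType C) (mulU : U -> U -> U) (mulA : A -> A -> A)
  (lUA : U -> A -> A) (rUA : A -> U -> A) (la : A -> X -> X) (ra : X -> A -> X)
  (lu : U -> X -> X) (ru : X -> U -> X) :
  banach_AU_module mulU mulA lUA rUA la ra lu ru ->
  banach_AU_module mulU mulA lUA rUA (liftL la) (liftR ra) (liftL lu) (liftR ru).
Proof.
move=> [[cla cra hla hra hlar] [clu cru hlu hru hlur] [c1 c2 c3] [c4 c5 c6]].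
have Lla := liftL_v cla; have Lra := liftR_v cra.
have Llu := liftL_v clu; have Lru := liftR_v cru.
split; [split|split|split|split].
- exact: cb_liftL.
- exact: cb_liftR.
- by move=> a b x; apply: l1_ext; rewrite ?(Lla, Lra, Llu, Lru); apply: funext => n /=; rewrite hla.
- by move=> a b x; apply: l1_ext; rewrite ?(Lla, Lra, Llu, Lru); apply: funext => n /=; rewrite hra.
- by move=> a b x; apply: l1_ext; rewrite ?(Lla, Lra, Llu, Lru); apply: funext => n /=; rewrite hlar.
- exact: cb_liftL.
- exact: cb_liftR.
- by move=> a b x; apply: l1_ext; rewrite ?(Lla, Lra, Llu, Lru); apply: funext => n /=; rewrite hlu.
- by move=> a b x; apply: l1_ext; rewrite ?(Lla, Lra, Llu, Lru); apply: funext => n /=; rewrite hru.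
- by move=> a b x; apply: l1_ext; rewrite ?(Lla, Lra, Llu, Lru); apply: funext => n /=; rewrite hlur.
- by move=> al a x; apply: l1_ext; rewrite ?(Lla, Lra, Llu, Lru); apply: funext => n /=; rewrite c1.
- by move=> al a x; apply: l1_ext; rewrite ?(Lla, Lra, Llu, Lru); apply: funext => n /=; rewrite c2.
- by move=> al a x; apply: l1_ext; rewrite ?(Lla, Lra, Llu, Lru); apply: funext => n /=; rewrite c3.
- by move=> al a x; apply: l1_ext; rewrite ?(Lla, Lra, Llu, Lru); apply: funext => n /=; rewrite c4.
- by move=> al a x; apply: l1_ext; rewrite ?(Lla, Lra, Llu, Lru); apply: funext => n /=; rewrite c5.
- by move=> al a x; apply: l1_ext; rewrite ?(Lla, Lra, Llu, Lru); apply: funext => n /=; rewrite c6.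
Qed.

Lemma l1_comm (U : completeNormedModType C) (lu : U -> X -> X) (ru : X -> U -> X) :
  commutative_action lu ru -> commutative_action (liftL lu) (liftR ru).
Proof.
by move=> h al x; rewrite /liftL /liftR; congr mkl1; apply: funext => n; rewrite h.
Qed.

Definition Dsum (A : completeNormedModType C) (Dn : nat -> A -> X -> C) (a : A) (e : E) : C :=
  csum (fun n => Dn n a (l1v e n)).

Lemma Dsum_summ (A : completeNormedModType C) (Dn : nat -> A -> X -> C) :
  (forall n a x, nr (Dn n a x) <= nr a * nr x) ->
  forall a e, summ (fun n => Dn n a (l1v e n)).
Proof.
move=> hB a e; exists (nr a * l1n e) => N.
apply: le_trans (_ : nr a * psn (l1v e) N <= _).
  by rewrite /psn mulr_sumr; apply: ler_sum => i _; apply: hB.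
by apply: ler_wpM2l; [apply: nr_ge0 | apply: psn_le].
Qed.

Lemma Dsum_le (A : completeNormedModType C) (Dn : nat -> A -> X -> C) :
  (forall n a x, nr (Dn n a x) <= nr a * nr x) ->
  forall a e, nr (Dsum Dn a e) <= nr a * l1n e.
Proof.
move=> hB a e; apply: csum_le; first exact: Dsum_summ.
move=> N; apply: le_trans (_ : nr a * psn (l1v e) N <= _).
  by rewrite /psn mulr_sumr; apply: ler_sum => i _; apply: hB.
by apply: ler_wpM2l; [apply: nr_ge0 | apply: psn_le].
Qed.

Lemma Dsum_der (U A : completeNormedModType C) (mulU : U -> U -> U) (mulA : A -> A -> A)
  (lUA : U -> A -> A) (rUA : A -> U -> A) (la : A -> X -> X) (ra : X -> A -> X)
  (lu : U -> X -> X) (ru : X -> U -> X) (Dn : nat -> A -> X -> C) :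
  banach_AU_module mulU mulA lUA rUA la ra lu ru ->
  (forall n, module_derivation mulA lUA rUA la ra lu ru (Dn n)) ->
  (forall n a x, nr (Dn n a x) <= nr a * nr x) ->
  module_derivation mulA lUA rUA (liftL la) (liftR ra) (liftL lu) (liftR ru) (Dsum Dn).
Proof.
move=> hM hD hB.
have [[cla cra _ _ _] [clu cru _ _ _] _ _] := hM.
have Lla := liftL_v cla; have Lra := liftR_v cra.
have Llu := liftL_v clu; have Lru := liftR_v cru.
have hs := Dsum_summ hB.
have Dlin : forall n a, dual_elem (Dn n a) by move=> n a; have [h _ _ _ _] := hD n; exact: h a.
split.
- move=> a; split.
  + move=> x y; rewrite /Dsum -csumD //; congr csum; apply: funext => n.
    by rewrite l1vD /=; have [h _ _] := Dlin n a; apply: h.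
  + move=> k x; rewrite /Dsum -csumZ //; congr csum; apply: funext => n.
    by rewrite l1vZ /=; have [_ h _] := Dlin n a; apply: h.
  + exists (nr a)%:C => x; apply: le_nr; exact: Dsum_le.
- move=> a b; apply: funext => x; rewrite /Dsum -csumD //; congr csum; apply: funext => n.
  by have [_ h _ _ _] := hD n; rewrite h.
- exists 1 => a x; rewrite mul1r normE [`|a|]normE l1_normE -rmorphM lecR.
  exact: Dsum_le.
- move=> a b; apply: funext => x; rewrite /dual_ract /dual_lact /Dsum -csumD //.
  congr csum; apply: funext => n; rewrite Lla Lra.
  by have [_ _ _ h _] := hD n; rewrite h /dual_ract /dual_lact.
- split.
  + move=> al a; apply: funext => x; rewrite /dual_lact /Dsum; congr csum.
    apply: funext => n; rewrite Lru.
    by have [_ _ _ _ [h _]] := hD n; rewrite h.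
  + move=> al a; apply: funext => x; rewrite /dual_ract /Dsum; congr csum.
    apply: funext => n; rewrite Llu.
    by have [_ _ _ _ [_ h]] := hD n; rewrite h.
Qed.


Definition delta (k : nat) (x : X) : E := mkl1 (fun n => if n == k then x else 0).

Lemma psn_delta k (x : X) N : psn (fun n => if n == k then x else 0) N = if (k < N)%N then nr x else 0.
Proof.
rewrite /psn (@sum_delta _ (fun n => nr (if n == k then x else 0)) k N).
  by rewrite eqxx.
by move=> m hm; rewrite (negbTE hm) nr0.
Qed.

Lemma delta_v k x : l1v (delta k x) = fun n => if n == k then x else 0.
Proof.
apply: mkl1K; exists (nr x) => N; rewrite psn_delta.
by case: ifP => _; [exact: lexx | exact: nr_ge0].
Qed.

Lemma delta_norm k x : l1n (delta k x) = nr x.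
Proof.
apply/le_anti/andP; split.
  apply: l1n_le => N; rewrite delta_v psn_delta.
  by case: ifP => _; [exact: lexx | exact: nr_ge0].
by have := psn_le (delta k x) k.+1; rewrite delta_v psn_delta ltnSn.
Qed.

Lemma delta_normC k x : `|delta k x| = `|x|.
Proof. by rewrite l1_normE delta_norm normE. Qed.

Lemma delta_D k x y : delta k (x + y) = delta k x + delta k y.
Proof.
apply: l1_ext; rewrite l1vD !delta_v; apply: funext => n /=.
by case: (n == k); rewrite ?addr0.
Qed.

Lemma delta_Z k (c : C) x : delta k (c *: x) = c *: delta k x.
Proof.
apply: l1_ext; rewrite l1vZ !delta_v; apply: funext => n /=.
by case: (n == k); rewrite ?scaler0.
Qed.

Lemma liftL_delta (T : normedModType C) (m : T -> X -> X) : contractive_bilinear m ->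
  forall t k x, liftL m t (delta k x) = delta k (m t x).
Proof.
move=> hm t k x; apply: l1_ext; rewrite liftL_v // !delta_v; apply: funext => n /=.
by case: (n == k); rewrite ?(cb_r0 hm).
Qed.

Lemma liftR_delta (T : normedModType C) (m : X -> T -> X) : contractive_bilinear m ->
  forall t k x, liftR m (delta k x) t = delta k (m x t).
Proof.
move=> hm t k x; apply: l1_ext; rewrite liftR_v // !delta_v; apply: funext => n /=.
by case: (n == k); rewrite ?(cb_l0 hm).
Qed.

Lemma dual0 (V : normedModType C) (f : V -> C) : dual_elem f -> f 0 = 0.
Proof.
move=> [h _ _]; have := h 0 0; rewrite addr0 => e.
by apply: (addrI (f 0)); rewrite addr0 -e.
Qed.

Lemma Dsum_delta (A : completeNormedModType C) (Dn : nat -> A -> X -> C) :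
  (forall n a, dual_elem (Dn n a)) -> forall a k x, Dsum Dn a (delta k x) = Dn k a x.
Proof.
move=> hD a k x; rewrite /Dsum delta_v.
rewrite (@csum_delta _ (fun n => Dn n a (if n == k then x else 0)) k) ?eqxx //.
by move=> m hm; rewrite (negbTE hm) dual0.
Qed.

Lemma dual_coord (g : E -> C) k : dual_elem g -> dual_elem (fun x => g (delta k x)).
Proof.
move=> [h1 h2 [M hM]]; split.
- by move=> x y; rewrite delta_D h1.
- by move=> c x; rewrite delta_Z h2.
- by exists M => x; rewrite -(delta_normC k x); apply: hM.
Qed.

Lemma ad_coord (A : completeNormedModType C) (la : A -> X -> X) (ra : X -> A -> X) :
  contractive_bilinear la -> contractive_bilinear ra ->
  forall (g : E -> C) a k x,
  ad_dual (liftL la) (liftR ra) g a (delta k x) = ad_dual la ra (fun y => g (delta k y)) a x.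
Proof.
move=> cla cra g a k x.
by rewrite /ad_dual /dual_lact /dual_ract liftL_delta // liftR_delta.
Qed.

Lemma nr_half_le (V W : normedZmodType C) (y : V) (a : W) (z : E) :
  `|y| <= (2^-1 : R)%:C * `|a| * `|z| -> nr y <= 2^-1 * (nr a * l1n z).
Proof.
move=> h; have := nr_le h; rewrite nrM nrR nr_norm mulrA.
by rewrite ger0_norm ?invr_ge0 ?ler0n.
Qed.

Lemma unifK (U A : completeNormedModType C) (mulU : U -> U -> U) (mulA : A -> A -> A)
  (lUA : U -> A -> A) (rUA : A -> U -> A) (la : A -> X -> X) (ra : X -> A -> X)
  (lu : U -> X -> X) (ru : X -> U -> X) :
  module_uniformly_approximately_amenable mulU mulA lUA rUA ->
  banach_AU_module mulU mulA lUA rUA la ra lu ru ->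
  commutative_action lu ru ->
  exists K : R, 0 < K /\ forall D, module_derivation mulA lUA rUA la ra lu ru D ->
    (forall a x, nr (D a x) <= nr a * nr x) ->
    exists f, dual_elem f /\ (forall x, nr (f x) <= K * nr x) /\
      forall a x, nr (D a x - ad_dual la ra f a x) <= 2^-1 * (nr a * nr x).
Proof.
move=> hU hM hC.
have [[cla cra _ _ _] _ _ _] := hM.
apply: contrapT => hno.
have bad : forall n : nat, exists D, module_derivation mulA lUA rUA la ra lu ru D /\
    (forall a x, nr (D a x) <= nr a * nr x) /\
    forall f, dual_elem f -> (forall x, nr (f x) <= n.+1%:R * nr x) ->
      ~ (forall a x, nr (D a x - ad_dual la ra f a x) <= 2^-1 * (nr a * nr x)).
  move=> n; apply: contrapT => hn; apply: hno; exists n.+1%:R; split; first by rewrite ltr0Sn.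
  move=> D hD hB; apply: contrapT => hf; apply: hn; exists D; split => //; split => //.
  by move=> f hf1 hf2 hf3; apply: hf; exists f.
have [Dn hDn] := choice bad.
have hDer : forall n, module_derivation mulA lUA rUA la ra lu ru (Dn n) by move=> n; case: (hDn n).
have hB : forall n a x, nr (Dn n a x) <= nr a * nr x by move=> n; case: (hDn n) => _ [].
have hDl : forall n a, dual_elem (Dn n a) by move=> n a; have [h _ _ _ _] := hDer n; exact: h.
have hS := Dsum_der hM hDer hB.
have := hU (l1 X) (liftL la) (liftR ra) (liftL lu) (liftR ru) (l1_module hM) (l1_comm hC) _ hS.
move=> [I [le [f [_ [lerefl _] _ hf hconv]]]].
have h2 : (0 : C) < (2^-1 : R)%:C by rewrite ltcR invr_gt0 ltr0n.
have [i0 hi0] := hconv _ h2.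
have h := hi0 i0 (lerefl i0).
have [_ _ [M hM']] := hf i0.
pose n := Num.Def.archi_bound (nr M).
have hn : nr M < n%:R by apply: archi_boundP; apply: nr_ge0.
case: (hDn n) => _ [_ hbad].
apply: (hbad (fun x => f i0 (delta n x))).
- exact: dual_coord.
- move=> x; have := nr_le (hM' (delta n x)).
  have e : nr (delta n x) = nr x by exact: delta_norm.
  rewrite e => hx.
  apply: le_trans hx _; apply: ler_wpM2r; first exact: nr_ge0.
  apply: le_trans (ltW hn) _; rewrite ler_nat; exact: leqnSn.
- move=> a x; rewrite -ad_coord // -(Dsum_delta hDl) -(delta_norm n x).
  exact: nr_half_le (h a (delta n x)).
Qed.

Lemma dual_of (V : normedModType C) (f : V -> C) :
  (forall x y, f (x + y) = f x + f y) -> (forall (k : C) x, f (k *: x) = k * f x) ->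
  (exists B : R, forall x, nr (f x) <= B * nr x) -> dual_elem f.
Proof. by move=> h1 h2 [B hB]; split => //; exists B%:C => x; apply: le_nr. Qed.

Lemma dual_nr (V : normedModType C) (f : V -> C) : dual_elem f ->
  exists B : R, 0 <= B /\ forall x, nr (f x) <= B * nr x.
Proof.
move=> [_ _ [M hM]]; exists (nr M); split; first exact: nr_ge0.
by move=> x; apply: nr_le.
Qed.

Lemma dual_sub (V : normedModType C) (f g : V -> C) : dual_elem f -> dual_elem g ->
  dual_elem (fun x => f x - g x).
Proof.
move=> hf hg; have [f1 f2 _] := hf; have [g1 g2 _] := hg.
have [Bf [_ hBf]] := dual_nr hf; have [Bg [_ hBg]] := dual_nr hg.
apply: dual_of.
- by move=> x y; rewrite f1 g1; ring.
- by move=> k x; rewrite f2 g2; ring.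
- exists (Bf + Bg) => x; apply: le_trans (nrD _ _) _; rewrite nrN mulrDl.
  exact: lerD.
Qed.

Lemma dual_add (V : normedModType C) (f g : V -> C) : dual_elem f -> dual_elem g ->
  dual_elem (fun x => f x + g x).
Proof.
move=> hf hg; have [f1 f2 _] := hf; have [g1 g2 _] := hg.
have [Bf [_ hBf]] := dual_nr hf; have [Bg [_ hBg]] := dual_nr hg.
apply: dual_of.
- by move=> x y; rewrite f1 g1; ring.
- by move=> k x; rewrite f2 g2; ring.
- exists (Bf + Bg) => x; apply: le_trans (nrD _ _) _; rewrite mulrDl.
  exact: lerD.
Qed.

Lemma dual_scale (V : normedModType C) (f : V -> C) (c : C) : dual_elem f ->
  dual_elem (fun x => c * f x).
Proof.
move=> hf; have [f1 f2 _] := hf; have [B [_ hB]] := dual_nr hf.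
apply: dual_of.
- by move=> x y; rewrite f1; ring.
- by move=> k x; rewrite f2; ring.
- exists (nr c * B) => x; rewrite nrM -mulrA; apply: ler_wpM2l; [exact: nr_ge0 | exact: hB].
Qed.

Lemma dual_zero (V : normedModType C) : dual_elem (fun _ : V => (0 : C)).
Proof.
apply: dual_of; [by move=> *; rewrite addr0 | by move=> *; rewrite mulr0 |].
by exists 0 => x; rewrite nr0 mul0r.
Qed.

Section Der.
Variables (U A : completeNormedModType C) (mulU : U -> U -> U) (mulA : A -> A -> A)
  (lUA : U -> A -> A) (rUA : A -> U -> A) (la : A -> X -> X) (ra : X -> A -> X)
  (lu : U -> X -> X) (ru : X -> U -> X).

Local Notation isDer := (module_derivation mulA lUA rUA la ra lu ru).

Lemma der_nr D : isDer D -> exists B : R, 0 < B /\ forall a x, nr (D a x) <= B * (nr a * nr x).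
Proof.
move=> [_ _ [M hM] _ _]; exists (nr M + 1); split; first by have := nr_ge0 M; lra.
move=> a x; have := nr_le (hM a x); rewrite nrM nr_norm => h.
apply: le_trans h _; rewrite -mulrA; apply: ler_wpM2r.
  by apply: mulr_ge0; apply: nr_ge0.
lra.
Qed.

Lemma der_of D :
  (forall a, dual_elem (D a)) ->
  (forall a b, D (a + b) = (fun x => D a x + D b x)) ->
  (exists B : R, forall a x, nr (D a x) <= B * (nr a * nr x)) ->
  (forall a b, D (mulA a b) = (fun x => dual_ract la (D a) b x + dual_lact ra a (D b) x)) ->
  (forall al a, D (lUA al a) = dual_lact ru al (D a)) ->
  (forall al a, D (rUA a al) = dual_ract lu (D a) al) -> isDer D.
Proof.
move=> h1 h2 [B hB] h4 h5 h6; split => //.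
exists B%:C => a x; rewrite -mulrA normE [`|a|]normE [`|x|]normE -!rmorphM lecR.
exact: hB.
Qed.

Lemma der_sub D1 D2 : isDer D1 -> isDer D2 -> isDer (fun a x => D1 a x - D2 a x).
Proof.
move=> hD1 hD2; have [a1 b1 _ d1 [e1 f1]] := hD1; have [a2 b2 _ d2 [e2 f2]] := hD2.
have [B1 [_ hB1]] := der_nr hD1; have [B2 [_ hB2]] := der_nr hD2.
apply: der_of.
- by move=> a; apply: dual_sub.
- by move=> a b; apply: funext => x; rewrite b1 b2; ring.
- exists (B1 + B2) => a x; apply: le_trans (nrD _ _) _; rewrite nrN mulrDl.
  exact: lerD.
- by move=> a b; apply: funext => x; rewrite d1 d2 /dual_ract /dual_lact; ring.
- by move=> al a; apply: funext => x; rewrite e1 e2.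
- by move=> al a; apply: funext => x; rewrite f1 f2.
Qed.

Lemma der_scale D (c : C) : isDer D -> isDer (fun a x => c * D a x).
Proof.
move=> hD; have [a1 b1 _ d1 [e1 f1]] := hD.
have [B [_ hB]] := der_nr hD.
apply: der_of.
- by move=> a; apply: dual_scale.
- by move=> a b; apply: funext => x; rewrite b1; ring.
- exists (nr c * B) => a x; rewrite nrM -mulrA; apply: ler_wpM2l; [exact: nr_ge0 | exact: hB].
- by move=> a b; apply: funext => x; rewrite d1 /dual_ract /dual_lact; ring.
- by move=> al a; apply: funext => x; rewrite e1.
- by move=> al a; apply: funext => x; rewrite f1.
Qed.

Lemma der_ad (f : X -> C) : banach_AU_module mulU mulA lUA rUA la ra lu ru ->
  commutative_action lu ru -> dual_elem f -> isDer (ad_dual la ra f).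
Proof.
move=> [[cla cra hla hra hlar] _ [c1 c2 c3] [c4 c5 c6]] hC hf.
have [f1 f2 _] := hf; have [Bf [Bf0 hBf]] := dual_nr hf.
have [la1 la2 la3 la4 _] := cla; have [ra1 ra2 ra3 ra4 _] := cra.
have bnd : forall a x, nr (ad_dual la ra f a x) <= (2 * Bf) * (nr a * nr x).
  move=> a x; rewrite /ad_dual /dual_lact /dual_ract.
  apply: le_trans (nrD _ _) _; rewrite nrN.
  have h1 : nr (f (ra x a)) <= Bf * (nr a * nr x).
    apply: le_trans (hBf _) _; apply: ler_wpM2l => //.
    by rewrite mulrC; exact: (cb_nr cra).
  have h2 : nr (f (la a x)) <= Bf * (nr a * nr x).
    apply: le_trans (hBf _) _; apply: ler_wpM2l => //; exact: (cb_nr cla).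
  have := lerD h1 h2; rewrite -mulrDl; suff -> : Bf + Bf = 2 * Bf by [].
  by ring.
apply: der_of.
- move=> a; apply: dual_of.
  + by move=> x y; rewrite /ad_dual /dual_lact /dual_ract ra1 la3 !f1; ring.
  + by move=> k x; rewrite /ad_dual /dual_lact /dual_ract ra2 la4 !f2; ring.
  + by exists (2 * Bf * nr a) => x; rewrite -mulrA; apply: bnd.
- by move=> a b; apply: funext => x; rewrite /ad_dual /dual_lact /dual_ract ra3 la1 !f1; ring.
- by exists (2 * Bf).
- move=> a b; apply: funext => x; rewrite /ad_dual /dual_lact /dual_ract.
  by rewrite hra hla hlar; ring.
- move=> al a; apply: funext => x; rewrite /ad_dual /dual_lact /dual_ract.
  by rewrite -c5 c3 -c1 hC.
- move=> al a; apply: funext => x; rewrite /ad_dual /dual_lact /dual_ract.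
  by rewrite c4 -c2 (hC al (ra x a)) c6.
Qed.

End Der.


Lemma geom_sum N : \sum_(0 <= k < N) ((2^-1 : R) ^+ k) = 2 - 2 * (2^-1) ^+ N.
Proof.
elim: N => [|N IH]; first by rewrite big_geq // expr0 mulr1 subrr.
rewrite big_nat_recr //= IH exprS.
have h : (2 : R) * 2^-1 = 1 by rewrite mulfV.
have -> : (2 : R) * (2^-1 * 2^-1 ^+ N) = 2^-1 ^+ N by rewrite mulrA h mul1r.
ring.
Qed.

Lemma geom_le N : \sum_(0 <= k < N) ((2^-1 : R) ^+ k) <= 2.
Proof.
rewrite geom_sum; have : 0 <= (2^-1 : R) ^+ N by apply: exprn_ge0; rewrite invr_ge0.
lra.
Qed.

Lemma geo_small (c e : R) : 0 < e -> exists N, c * (2^-1) ^+ N <= e.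
Proof.
move=> he.
pose N := (Num.Def.archi_bound (`|c| / e)).+1.
exists N.
have h1 : `|c| / e < N%:R.
  apply: lt_le_trans (archi_boundP _) _; first by apply: divr_ge0 => //; apply: ltW.
  by rewrite ler_nat.
have hN : 0 < (N%:R : R) by rewrite ltr0n.
have h2 : (N%:R : R) <= 2 ^+ N.
  by rewrite -natrX ler_nat; apply: ltnW; apply: ltn_expl.
have h3 : (2^-1 : R) ^+ N = (2 ^+ N)^-1 by rewrite exprVn.
have h4 : (2^-1 : R) ^+ N <= (N%:R)^-1.
  by rewrite h3 lef_pV2 ?posrE //; apply: exprn_gt0.
have h5 : 0 <= (2^-1 : R) ^+ N by apply: exprn_ge0; rewrite invr_ge0.
apply: le_trans (_ : `|c| * (2^-1) ^+ N <= _).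
  by apply: ler_wpM2r => //; apply: ler_norm.
apply: le_trans (_ : `|c| * (N%:R)^-1 <= _).
  by apply: ler_wpM2l => //.
rewrite -(@ler_pM2r _ N%:R) // mulrAC -mulrA mulfV ?mulr1 ?gt_eqF //.
by rewrite ltr_pdivrMr // in h1; rewrite mulrC; apply: ltW.
Qed.

Lemma csumB (t s : nat -> C) : summ t -> summ s ->
  csum (fun k => t k - s k) = csum t - csum s.
Proof.
move=> ht hs.
have -> : (fun k => t k - s k) = (fun k => t k + (-1) * s k).
  by apply: funext => k; rewrite mulN1r.
by rewrite csumD ?csumZ ?mulN1r //; apply: summZ.
Qed.

Lemma ad_add (A : completeNormedModType C) (la : A -> X -> X) (ra : X -> A -> X) (f g : X -> C) a x :
  ad_dual la ra (fun y => f y + g y) a x = ad_dual la ra f a x + ad_dual la ra g a x.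
Proof. by rewrite /ad_dual /dual_lact /dual_ract; ring. Qed.

Lemma ad_scale (A : completeNormedModType C) (la : A -> X -> X) (ra : X -> A -> X) (f : X -> C) (c : C) a x :
  ad_dual la ra (fun y => c * f y) a x = c * ad_dual la ra f a x.
Proof. by rewrite /ad_dual /dual_lact /dual_ract; ring. Qed.

Lemma eqle (x y : R) : x = y -> x <= y.
Proof. by move->. Qed.

Lemma summB (t s : nat -> C) : summ t -> summ s -> summ (fun k => t k - s k).
Proof.
move=> [M1 H1] [M2 H2]; exists (M1 + M2) => N.
apply: le_trans (lerD (H1 N) (H2 N)); rewrite -big_split /=.
by apply: ler_sum => i _; apply: le_trans (nrD _ _) _; rewrite nrN.
Qed.

Lemma main_amen (U A : completeNormedModType C) (mulU : U -> U -> U) (mulA : A -> A -> A)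
  (lUA : U -> A -> A) (rUA : A -> U -> A) (la : A -> X -> X) (ra : X -> A -> X)
  (lu : U -> X -> X) (ru : X -> U -> X) :
  module_uniformly_approximately_amenable mulU mulA lUA rUA ->
  banach_AU_module mulU mulA lUA rUA la ra lu ru ->
  commutative_action lu ru ->
  forall D, module_derivation mulA lUA rUA la ra lu ru D ->
  exists f, dual_elem f /\ forall a, D a = ad_dual la ra f a.
Proof.
move=> hU hM hC D hD.
have [K [K0 hK]] := unifK hU hM hC.
have hK2 : forall D' B, module_derivation mulA lUA rUA la ra lu ru D' -> 0 < B ->
    (forall a x, nr (D' a x) <= B * (nr a * nr x)) ->
    exists f, dual_elem f /\ (forall x, nr (f x) <= K * B * nr x) /\
      forall a x, nr (D' a x - ad_dual la ra f a x) <= B / 2 * (nr a * nr x).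
  move=> D' B hD' hB hb.
  have hBi : 0 < B^-1 by rewrite invr_gt0.
  have hb' : forall a x, nr ((B^-1)%:C * D' a x) <= nr a * nr x.
    move=> a x; rewrite nrM nrR (ger0_norm (ltW hBi)).
    apply: le_trans (_ : B^-1 * (B * (nr a * nr x)) <= _).
      by apply: ler_wpM2l => //; apply: ltW.
    by rewrite mulrA mulVf ?mul1r // gt_eqF.
  have hDs : module_derivation mulA lUA rUA la ra lu ru (fun a x => (B^-1)%:C * D' a x).
    exact: der_scale.
  have [f [hf [hfb hfa]]] := hK _ hDs hb'.
  exists (fun x => B%:C * f x); split; first exact: dual_scale.
  split.
    move=> x; rewrite nrM nrR (ger0_norm (ltW hB)) -mulrA mulrCA.
    by apply: ler_wpM2l => //; apply: ltW.
  move=> a x; rewrite ad_scale.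
  have -> : D' a x - B%:C * ad_dual la ra f a x =
      B%:C * ((B^-1)%:C * D' a x - ad_dual la ra f a x).
    have hBB : B%:C * (B^-1)%:C = 1 :> C by rewrite -rmorphM mulfV ?gt_eqF // rmorph1.
    by rewrite -[in LHS](mul1r (D' a x)) -hBB; ring.
  rewrite nrM nrR (ger0_norm (ltW hB)).
  apply: le_trans (_ : B * (2^-1 * (nr a * nr x)) <= _).
    by apply: ler_wpM2l => //; apply: ltW.
  by rewrite mulrA.
have step : forall p : (A -> X -> C) * R, exists f : X -> C,
    (module_derivation mulA lUA rUA la ra lu ru p.1 /\ 0 < p.2 /\
      forall a x, nr (p.1 a x) <= p.2 * (nr a * nr x)) ->
    dual_elem f /\ (forall x, nr (f x) <= K * p.2 * nr x) /\
      forall a x, nr (p.1 a x - ad_dual la ra f a x) <= p.2 / 2 * (nr a * nr x).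
  move=> [D' B].
  case: (pselect (module_derivation mulA lUA rUA la ra lu ru D' /\ 0 < B /\
      forall a x, nr (D' a x) <= B * (nr a * nr x))) => [[h1 [h2 h3]]|hn].
    by have [f hf] := hK2 D' B h1 h2 h3; exists f.
  by exists (fun _ => 0) => h; exfalso; apply: hn.
have [F hF] := choice step.
have [B0 [B00 hB0]] := der_nr hD.
pose Bk k := B0 * (2^-1) ^+ k.
have Bkpos : forall k, 0 < Bk k.
  by move=> k; apply: mulr_gt0 => //; apply: exprn_gt0; rewrite invr_gt0.
pose fix P k : X -> C := if k is k'.+1 then
    (fun x => P k' x + F ((fun a y => D a y - ad_dual la ra (P k') a y), Bk k') x)
  else (fun _ => 0).
pose Dk k := fun a y => D a y - ad_dual la ra (P k) a y.
pose inc k := F (Dk k, Bk k).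
have Pinc : forall k x, P k.+1 x = P k x + inc k x by [].
have inv : forall k, dual_elem (P k) /\ module_derivation mulA lUA rUA la ra lu ru (Dk k) /\
    forall a x, nr (Dk k a x) <= Bk k * (nr a * nr x).
  elim => [|k [hP [hDk hbk]]].
    split; first exact: dual_zero.
    split; first by apply: der_sub => //; apply: (der_ad hM hC); apply: dual_zero.
    move=> a x; rewrite /Dk /ad_dual /dual_lact /dual_ract /= subrr subr0 /Bk expr0 mulr1.
    exact: hB0.
  have [hi [hib hia]] := hF (Dk k, Bk k) (conj hDk (conj (Bkpos k) hbk)).
  have eD : Dk k.+1 = (fun a y => Dk k a y - ad_dual la ra (inc k) a y).
    apply: funext => a; apply: funext => y.
    by rewrite /Dk [P k.+1]/= ad_add -/(inc k); ring.
  split; first by apply: dual_add.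
  split; first by rewrite eD; apply: der_sub => //; apply: (der_ad hM hC).
  move=> a x; rewrite eD; apply: le_trans (hia a x) _.
  by rewrite /= /Bk exprS; apply: eqle; ring.
have hinc : forall k, dual_elem (inc k) /\ forall x, nr (inc k x) <= K * Bk k * nr x.
  move=> k; have [_ [hDk hbk]] := inv k.
  have [hi [hib _]] := hF (Dk k, Bk k) (conj hDk (conj (Bkpos k) hbk)).
  by split.
have hsum : forall x, summ (fun k => inc k x).
  move=> x; exists (2 * (K * B0 * nr x)) => N.
  apply: le_trans (_ : \sum_(0 <= k < N) (K * B0 * nr x) * (2^-1) ^+ k <= _).
    apply: ler_sum => k _; apply: le_trans ((hinc k).2 x) _.
    by rewrite /Bk; apply: eqle; ring.
  rewrite -mulr_sumr mulrC; apply: ler_wpM2r; last exact: geom_le.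
  by apply: mulr_ge0; [apply: mulr_ge0; [apply: ltW | apply: ltW] | apply: nr_ge0].
have tele : forall x N, ps (fun k => inc k x) N = P N x.
  move=> x; elim => [|N IH]; first by rewrite /ps big_geq.
  by rewrite /ps big_nat_recr //= -/(ps _ N) IH.
pose f x := csum (fun k => inc k x).
exists f; split.
  apply: dual_of.
  - move=> x y; rewrite /f -csumD //; congr csum; apply: funext => k.
    by have [[h _ _] _] := hinc k; apply: h.
  - move=> c x; rewrite /f -csumZ //; congr csum; apply: funext => k.
    by have [[_ h _] _] := hinc k; apply: h.
  - exists (2 * (K * B0)) => x; rewrite /f; apply: csum_le => // N.
    apply: le_trans (_ : \sum_(0 <= k < N) (K * B0 * nr x) * (2^-1) ^+ k <= _).
      apply: ler_sum => k _; apply: le_trans ((hinc k).2 x) _.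
      by rewrite /Bk; apply: eqle; ring.
    rewrite -mulr_sumr.
    have h0 : 0 <= K * B0 * nr x by apply: mulr_ge0; [apply: mulr_ge0; apply: ltW | apply: nr_ge0].
    apply: le_trans (ler_wpM2l h0 (geom_le N)) _; apply: eqle; ring.
move=> a; apply: funext => x.
rewrite /ad_dual /dual_lact /dual_ract /f -csumB //.
symmetry; apply: csum_eq.
  by apply: summB.
move=> e he.
have [N hN] := geo_small (B0 * (nr a * nr x)) he.
exists N => n hn.
have -> : ps (fun k => inc k (ra x a) - inc k (la a x)) n - D a x = - Dk n a x.
  rewrite /ps big_split /= sumrN -/(ps _ n) -/(ps (fun k => inc k (la a x)) n) !tele.
  by rewrite /Dk /ad_dual /dual_lact /dual_ract; ring.
rewrite nrN; apply: le_trans ((inv n).2.2 a x) _; apply: le_trans _ hN.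
rewrite /Bk mulrAC; apply: ler_wpM2l.
  by apply: mulr_ge0 => //; [apply: ltW | apply: mulr_ge0; apply: nr_ge0].
apply: ler_wiXn2l (leq_trans _ hn) => //.
all: first [by rewrite invr_ge0 | by rewrite invf_le1 ?ltr0n // ler1n].
Qed.


End LM.

Theorem theorem4p6 (R : realType)
    (U : completeNormedModType R[i]) (mulU : U -> U -> U)
    (A : completeNormedModType R[i]) (mulA : A -> A -> A)
    (lUA : U -> A -> A) (rUA : A -> U -> A) :
  banach_algebra mulU ->
  banach_algebra mulA ->
  banach_bimodule mulU lUA rUA ->
  commutative_action lUA rUA ->
  compatible_actions mulA lUA rUA ->
  (module_uniformly_approximately_amenable mulU mulA lUA rUA <->
   module_amenable mulU mulA lUA rUA).
Proof.
move=> _ _ _ _ _; split.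
  move=> hU X la ra lu ru hM hC D hD.
  exact: (main_amen hU hM hC hD).
move=> hA X la ra lu ru hM hC D hD.
have [f [hf hDf]] := hA X la ra lu ru hM hC D hD.
exists unit, (fun _ _ => True), (fun _ => f); split => //.
move=> eps heps; exists tt => i _ a x; rewrite hDf subrr normr0.
by apply: mulr_ge0; [apply: mulr_ge0; [apply: ltW | apply: normr_ge0] | apply: normr_ge0].
Qed.
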